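(* Let $A$ (in $\mathcal H$) and $B$ (in $\mathcal K$) be closed densely defined operators with $A\dashv B$, with a (possibly unbounded) intertwining operator $T$, and assume that $T^{-1}$ is bounded and everywhere defined on $\mathcal K$. Then $\rho(A)\setminus\sigma_p(B)\subseteq\rho(B)$.
   Context: A closed, densely defined operator $T:\mathcal H\to\mathcal K$ is called an intertwining operator for $A$ and $B$ if: (io$_0$) $D(A)\subset D(T)$ and $D(TA)=D(A)$; (io$_1$) $T$ maps $D(A)$ into $D(B)$; (io$_2$) $BT\xi=TA\xi$ for all $\xi\in D(A)$. We write $A\dashv B$ if there exists an intertwining operator $T$ for $A$ and $B$ which is injective with densely defined inverse $T^{-1}$. $\rho$ denotes the resolvent set, $\sigma_p$ the point spectrum. *)

(* Defs.v *)
From Stdlib Require Import Reals.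
Open Scope R_scope.

Set Implicit Arguments.

Record Cpx := mkC { Re : R ; Im : R }.
Definition C0 : Cpx := mkC 0 0.
Definition C1 : Cpx := mkC 1 0.
Definition Cadd (z w : Cpx) : Cpx := mkC (Re z + Re w) (Im z + Im w).
Definition Copp (z : Cpx) : Cpx := mkC (- Re z) (- Im z).
Definition Cmul (z w : Cpx) : Cpx :=
  mkC (Re z * Re w - Im z * Im w) (Re z * Im w + Im z * Re w).
Definition Cconj (z : Cpx) : Cpx := mkC (Re z) (- Im z).

Definition cauchy_wrt {V : Type} (d : V -> V -> R) (u : nat -> V) : Prop :=
  forall eps, eps > 0 -> exists N : nat,
    forall n m, (n >= N)%nat -> (m >= N)%nat -> d (u n) (u m) < eps.
Definition conv_wrt {V : Type} (d : V -> V -> R) (u : nat -> V) (l : V) : Prop :=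
  forall eps, eps > 0 -> exists N : nat, forall n, (n >= N)%nat -> d (u n) l < eps.

(** * Complex Hilbert spaces (inner product linear in the first argument) *)
Record HilbertSpace := {
  hs_car :> Type;
  hs_zero : hs_car;
  hs_add : hs_car -> hs_car -> hs_car;
  hs_opp : hs_car -> hs_car;
  hs_scal : Cpx -> hs_car -> hs_car;
  hs_inner : hs_car -> hs_car -> Cpx;
  hs_add_assoc : forall x y z, hs_add x (hs_add y z) = hs_add (hs_add x y) z;
  hs_add_comm : forall x y, hs_add x y = hs_add y x;
  hs_add_0_l : forall x, hs_add hs_zero x = x;
  hs_add_opp_l : forall x, hs_add (hs_opp x) x = hs_zero;
  hs_scal_assoc : forall a b x, hs_scal a (hs_scal b x) = hs_scal (Cmul a b) x;
  hs_scal_1 : forall x, hs_scal C1 x = x;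
  hs_scal_add_r : forall a x y, hs_scal a (hs_add x y) = hs_add (hs_scal a x) (hs_scal a y);
  hs_scal_add_l : forall a b x, hs_scal (Cadd a b) x = hs_add (hs_scal a x) (hs_scal b x);
  hs_inner_add_l : forall x y z, hs_inner (hs_add x y) z = Cadd (hs_inner x z) (hs_inner y z);
  hs_inner_scal_l : forall a x y, hs_inner (hs_scal a x) y = Cmul a (hs_inner x y);
  hs_inner_conj : forall x y, hs_inner y x = Cconj (hs_inner x y);
  hs_inner_pos : forall x, 0 <= Re (hs_inner x x);
  hs_inner_def : forall x, hs_inner x x = C0 -> x = hs_zero;
  hs_complete : forall u : nat -> hs_car,
    cauchy_wrt (fun x y => sqrt (Re (hs_inner (hs_add x (hs_opp y)) (hs_add x (hs_opp y))))) u ->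
    exists l, conv_wrt (fun x y => sqrt (Re (hs_inner (hs_add x (hs_opp y)) (hs_add x (hs_opp y))))) u l
}.

Arguments hs_zero {h}.
Arguments hs_add {h}.
Arguments hs_opp {h}.
Arguments hs_scal {h}.
Arguments hs_inner {h}.

Definition vsub {H : HilbertSpace} (x y : H) : H := hs_add x (hs_opp y).
Definition norm {H : HilbertSpace} (x : H) : R := sqrt (Re (hs_inner x x)).
Definition converges {H : HilbertSpace} (u : nat -> H) (l : H) : Prop :=
  conv_wrt (fun x y => norm (vsub x y)) u l.

(** * (Possibly unbounded) operators: a domain and an action on it.
    Values of [app] outside [dom] are irrelevant. *)
Record Op (H K : HilbertSpace) := { dom : H -> Prop ; app : H -> K }.

Definition is_linear_op {H K : HilbertSpace} (A : Op H K) : Prop :=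
  dom A hs_zero /\
  (forall x y, dom A x -> dom A y ->
     dom A (hs_add x y) /\ app A (hs_add x y) = hs_add (app A x) (app A y)) /\
  (forall a x, dom A x -> dom A (hs_scal a x) /\ app A (hs_scal a x) = hs_scal a (app A x)).

Definition densely_defined {H K : HilbertSpace} (A : Op H K) : Prop :=
  forall x eps, eps > 0 -> exists d, dom A d /\ norm (vsub x d) < eps.

Definition closed_op {H K : HilbertSpace} (A : Op H K) : Prop :=
  forall (u : nat -> H) x y, (forall n, dom A (u n)) ->
    converges u x -> converges (fun n => app A (u n)) y ->
    dom A x /\ app A x = y.

Definition closed_dd_op {H K : HilbertSpace} (A : Op H K) : Prop :=
  is_linear_op A /\ closed_op A /\ densely_defined A.

Definition intertwining {H K : HilbertSpace} (T : Op H K) (A : Op H H) (B : Op K K) : Prop :=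
  closed_dd_op T /\
  (* io0: D(A) ⊂ D(T) and D(TA) = D(A), i.e. A ξ ∈ D(T) for ξ ∈ D(A) *)
  (forall xi, dom A xi -> dom T xi) /\
  (forall xi, dom A xi -> dom T (app A xi)) /\
  (forall xi, dom A xi -> dom B (app T xi)) /\
  (forall xi, dom A xi -> app B (app T xi) = app T (app A xi)).

Definition op_injective {H K : HilbertSpace} (T : Op H K) : Prop :=
  forall x y, dom T x -> dom T y -> app T x = app T y -> x = y.

(** T^{-1} (with domain the range of T) is densely defined. *)
Definition inverse_densely_defined {H K : HilbertSpace} (T : Op H K) : Prop :=
  forall k eps, eps > 0 -> exists x, dom T x /\ norm (vsub k (app T x)) < eps.

Definition inverse_bounded_everywhere {H K : HilbertSpace} (T : Op H K) : Prop :=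
  (forall k, exists x, dom T x /\ app T x = k) /\
  (exists c, forall x, dom T x -> norm x <= c * norm (app T x)).

Definition dashv_via {H K : HilbertSpace} (T : Op H K) (A : Op H H) (B : Op K K) : Prop :=
  intertwining T A B /\ op_injective T /\ inverse_densely_defined T.

Definition shift_app {H : HilbertSpace} (A : Op H H) (lam : Cpx) (x : H) : H :=
  vsub (app A x) (hs_scal lam x).

Definition in_resolvent {H : HilbertSpace} (A : Op H H) (lam : Cpx) : Prop :=
  (forall x y, dom A x -> dom A y -> shift_app A lam x = shift_app A lam y -> x = y) /\
  (forall h, exists x, dom A x /\ shift_app A lam x = h) /\
  (exists c, forall x, dom A x -> norm x <= c * norm (shift_app A lam x)).

Definition in_point_spectrum {H : HilbertSpace} (A : Op H H) (lam : Cpx) : Prop :=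
  exists x, dom A x /\ x <> hs_zero /\ app A x = hs_scal lam x.

(* Main.v *)
Require Import Defs.
From Stdlib Require Import Reals Lra Classical IndefiniteDescription Lia.
Open Scope R_scope.

Section Alg.
Variable H : HilbertSpace.
Implicit Types x y z a b c d : H.

Lemma add_0_r x : hs_add x hs_zero = x.
Proof. rewrite hs_add_comm; apply hs_add_0_l. Qed.
Lemma add_opp_r x : hs_add x (hs_opp x) = hs_zero.
Proof. rewrite hs_add_comm; apply hs_add_opp_l. Qed.
Lemma add_cancel_r a b x : hs_add a x = hs_add b x -> a = b.
Proof.
  intro E. rewrite <- (add_0_r a), <- (add_0_r b), <- (add_opp_r x), !hs_add_assoc, E; reflexivity.
Qed.
Lemma opp_unique a b : hs_add a b = hs_zero -> hs_opp a = b.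
Proof.
  intro E. rewrite <- (add_0_r (hs_opp a)), <- E, hs_add_assoc, hs_add_opp_l, hs_add_0_l; reflexivity.
Qed.
Lemma opp_opp x : hs_opp (hs_opp x) = x.
Proof. apply opp_unique, hs_add_opp_l. Qed.
Lemma add_swap a b c d : hs_add (hs_add a b) (hs_add c d) = hs_add (hs_add a c) (hs_add b d).
Proof.
  rewrite <- !hs_add_assoc. f_equal. rewrite !hs_add_assoc. f_equal. apply hs_add_comm.
Qed.
Lemma opp_add x y : hs_opp (hs_add x y) = hs_add (hs_opp x) (hs_opp y).
Proof.
  apply opp_unique. rewrite add_swap, !add_opp_r; apply hs_add_0_l.
Qed.
Lemma vsub_diag x : vsub x x = hs_zero.
Proof. apply add_opp_r. Qed.
Lemma vsub_add_l a b c d : vsub (hs_add a b) (hs_add c d) = hs_add (vsub a c) (vsub b d).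
Proof. unfold vsub. rewrite opp_add; apply add_swap. Qed.
Lemma vsub_chain a b c : vsub a c = hs_add (vsub a b) (vsub b c).
Proof.
  unfold vsub. rewrite <- hs_add_assoc. f_equal.
  rewrite hs_add_assoc, hs_add_opp_l, hs_add_0_l; reflexivity.
Qed.
Lemma vsub_sym a b : vsub a b = hs_opp (vsub b a).
Proof. unfold vsub. rewrite opp_add, opp_opp; apply hs_add_comm. Qed.
Lemma vsub_eq0 x y : vsub x y = hs_zero -> x = y.
Proof.
  intro E. rewrite <- (hs_add_0_l _ y), <- E. unfold vsub.
  rewrite <- hs_add_assoc, hs_add_opp_l, add_0_r; reflexivity.
Qed.
Lemma vsub_add_cancel a b : vsub (hs_add a b) b = a.
Proof. unfold vsub. rewrite <- hs_add_assoc, add_opp_r, add_0_r; reflexivity. Qed.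
Lemma vsub_add_cancel_l a h : vsub (hs_add a h) a = h.
Proof. rewrite hs_add_comm; apply vsub_add_cancel. Qed.
Lemma vsub_add_back a b : hs_add (vsub a b) b = a.
Proof. unfold vsub. rewrite <- hs_add_assoc, hs_add_opp_l, add_0_r; reflexivity. Qed.
Lemma vsub_vsub_r y h z : vsub y (vsub h z) = hs_add (vsub y h) z.
Proof. unfold vsub. rewrite opp_add, opp_opp, hs_add_assoc; reflexivity. Qed.
Lemma vsub_add_comm a x b : vsub (hs_add a x) b = hs_add (vsub a b) x.
Proof.
  unfold vsub. rewrite <- !hs_add_assoc. f_equal. apply hs_add_comm.
Qed.
Lemma vsub_self_l y h : vsub (vsub y h) y = hs_opp h.
Proof.
  unfold vsub. rewrite (hs_add_comm _ y), <- hs_add_assoc, add_opp_r, add_0_r; reflexivity.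
Qed.
Lemma vsub_three h g1 g2 y0 :
  vsub h (vsub g1 g2) = vsub (vsub (hs_add y0 h) g1) (vsub y0 g2).
Proof.
  change (vsub h (vsub g1 g2) = vsub (hs_add (hs_add y0 h) (hs_opp g1)) (hs_add y0 (hs_opp g2))).
  rewrite vsub_add_l, vsub_add_cancel_l.
  unfold vsub. rewrite opp_add. reflexivity.
Qed.

Definition mone := mkC (-1) 0.
Lemma Cmul_comm (p q : Cpx) : Cmul p q = Cmul q p.
Proof. destruct p, q; unfold Cmul; simpl; f_equal; ring. Qed.
Lemma scal_zero_l x : hs_scal C0 x = hs_zero.
Proof.
  symmetry. apply (add_cancel_r _ _ (hs_scal C0 x)). rewrite hs_add_0_l, <- hs_scal_add_l.
  f_equal. unfold Cadd, C0; simpl; f_equal; ring.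
Qed.
Lemma opp_scal x : hs_opp x = hs_scal mone x.
Proof.
  apply (add_cancel_r _ _ x). rewrite hs_add_opp_l.
  rewrite <- (hs_scal_1 _ x) at 2. rewrite <- hs_scal_add_l.
  rewrite <- (scal_zero_l x). f_equal. unfold Cadd, mone, C1, C0; simpl; f_equal; ring.
Qed.
Lemma scal_opp p x : hs_scal p (hs_opp x) = hs_opp (hs_scal p x).
Proof. rewrite !opp_scal, !hs_scal_assoc, Cmul_comm; reflexivity. Qed.
Lemma scal_vsub p x y : hs_scal p (vsub x y) = vsub (hs_scal p x) (hs_scal p y).
Proof. unfold vsub. rewrite hs_scal_add_r, scal_opp; reflexivity. Qed.
Lemma scal_comm p q x : hs_scal p (hs_scal q x) = hs_scal q (hs_scal p x).
Proof. rewrite !hs_scal_assoc, Cmul_comm; reflexivity. Qed.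
Lemma scal_inv_real t x : t <> 0 -> hs_scal (mkC (/t) 0) (hs_scal (mkC t 0) x) = x.
Proof.
  intro Ht. rewrite hs_scal_assoc. rewrite <- (hs_scal_1 _ x) at 2. f_equal.
  unfold Cmul, C1; simpl. apply f_equal2; [field; auto | ring].
Qed.

Definition Rip x y := Re (hs_inner x y).
Lemma Rip_sym x y : Rip x y = Rip y x.
Proof. unfold Rip. rewrite (hs_inner_conj H y x). reflexivity. Qed.
Lemma Rip_add_l x y z : Rip (hs_add x y) z = Rip x z + Rip y z.
Proof. unfold Rip. rewrite hs_inner_add_l. reflexivity. Qed.
Lemma Rip_add_r x y z : Rip z (hs_add x y) = Rip z x + Rip z y.
Proof. rewrite !(Rip_sym z). apply Rip_add_l. Qed.
Lemma Rip_scal_l t x y : Rip (hs_scal (mkC t 0) x) y = t * Rip x y.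
Proof. unfold Rip. rewrite hs_inner_scal_l. simpl. ring. Qed.
Lemma Rip_scal_r t x y : Rip y (hs_scal (mkC t 0) x) = t * Rip y x.
Proof. rewrite !(Rip_sym y). apply Rip_scal_l. Qed.
Lemma Rip_pos x : 0 <= Rip x x.
Proof. apply hs_inner_pos. Qed.

Lemma norm_nonneg x : 0 <= norm x.
Proof. apply sqrt_pos. Qed.

Lemma Rip_scal_self p x :
  Rip (hs_scal p x) (hs_scal p x) = (Re p * Re p + Im p * Im p) * Rip x x.
Proof.
  unfold Rip. rewrite hs_inner_scal_l, (hs_inner_conj H (hs_scal p x) x), hs_inner_scal_l.
  destruct p as [a b]. destruct (hs_inner x x) as [u v]. simpl. ring.
Qed.

Lemma norm_scal p x : norm (hs_scal p x) = sqrt (Re p * Re p + Im p * Im p) * norm x.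
Proof.
  unfold norm. fold (Rip (hs_scal p x) (hs_scal p x)). rewrite Rip_scal_self.
  apply sqrt_mult. nra. apply Rip_pos.
Qed.
Lemma norm_scal_real t x : 0 <= t -> norm (hs_scal (mkC t 0) x) = t * norm x.
Proof.
  intro. rewrite norm_scal. simpl. f_equal. replace (t*t+0*0) with (t*t) by ring.
  apply sqrt_square; auto.
Qed.
Lemma norm_opp x : norm (hs_opp x) = norm x.
Proof.
  rewrite opp_scal, norm_scal. unfold mone; simpl.
  replace (-1 * -1 + 0 * 0) with 1 by ring. rewrite sqrt_1; ring.
Qed.
Lemma norm_zero : norm (@hs_zero H) = 0.
Proof.
  rewrite <- (scal_zero_l hs_zero), norm_scal. unfold C0; simpl.
  replace (0*0+0*0) with 0 by ring. rewrite sqrt_0; ring.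
Qed.

Lemma CS x y : Rip x y * Rip x y <= Rip x x * Rip y y.
Proof.
  set (p := Rip x x). set (q := Rip y y). set (s := Rip x y).
  assert (Q : forall t, 0 <= p + 2 * t * s + t * t * q).
  { intro t. pose proof (Rip_pos (hs_add x (hs_scal (mkC t 0) y))) as P.
    rewrite Rip_add_l, !Rip_add_r, !Rip_scal_l, !Rip_scal_r, (Rip_sym y x) in P.
    unfold p, q, s. nra. }
  assert (q0 : 0 <= q) by apply Rip_pos.
  assert (p0 : 0 <= p) by apply Rip_pos.
  destruct (Req_dec q 0) as [E|E].
  - destruct (Req_dec s 0) as [Es|Es].
    + rewrite Es, E. nra.
    + exfalso. specialize (Q (- (p+1) / (2*s))). rewrite E in Q.
      replace (p + 2 * (- (p + 1) / (2 * s)) * s + - (p + 1) / (2 * s) * (- (p + 1) / (2 * s)) * 0)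
        with (-1) in Q by (field; auto). lra.
  - assert (qp : 0 < q) by lra.
    set (u := s / q). assert (su : s = u * q) by (unfold u; field; auto).
    specialize (Q (- u)). rewrite su in Q |- *. nra.
Qed.

Lemma norm_triangle x y : norm (hs_add x y) <= norm x + norm y.
Proof.
  unfold norm. fold (Rip x x) (Rip y y) (Rip (hs_add x y) (hs_add x y)).
  rewrite Rip_add_l, !Rip_add_r, (Rip_sym y x).
  pose proof (Rip_pos x); pose proof (Rip_pos y).
  assert (Hs : Rip x y <= sqrt (Rip x x) * sqrt (Rip y y)).
  { rewrite <- sqrt_mult by auto.
    apply Rle_trans with (Rabs (Rip x y)). apply Rle_abs.
    rewrite <- sqrt_Rsqr_abs. apply sqrt_le_1_alt. unfold Rsqr. apply CS. }
  rewrite <- (sqrt_square (sqrt (Rip x x) + sqrt (Rip y y))).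
  2:{ pose proof (sqrt_pos (Rip x x)); pose proof (sqrt_pos (Rip y y)); lra. }
  apply sqrt_le_1_alt.
  pose proof (sqrt_sqrt (Rip x x) H0). pose proof (sqrt_sqrt (Rip y y) H1). nra.
Qed.

Lemma norm_vsub_sym a b : norm (vsub a b) = norm (vsub b a).
Proof. rewrite vsub_sym, norm_opp; reflexivity. Qed.
Lemma norm_vsub_tri a b c : norm (vsub a c) <= norm (vsub a b) + norm (vsub b c).
Proof. rewrite (vsub_chain a b c). apply norm_triangle. Qed.
Lemma norm_vsub_le a b : norm (vsub a b) <= norm a + norm b.
Proof. unfold vsub. rewrite <- (norm_opp b). apply norm_triangle. Qed.

End Alg.

Section Lin.
Variables H K : HilbertSpace.
Variable A : Op H K.
Hypothesis Alin : is_linear_op A.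

Lemma lin_zero : app A hs_zero = hs_zero.
Proof.
  destruct Alin as [D0 [Dadd _]]. destruct (Dadd _ _ D0 D0) as [_ E].
  rewrite add_0_r in E. symmetry. apply (add_cancel_r _ _ _ (app A hs_zero)).
  rewrite hs_add_0_l. exact E.
Qed.
Lemma lin_opp x : dom A x -> dom A (hs_opp x) /\ app A (hs_opp x) = hs_opp (app A x).
Proof.
  intro Dx. destruct Alin as [_ [_ Dsc]]. rewrite !opp_scal. apply Dsc; auto.
Qed.
Lemma lin_vsub x y : dom A x -> dom A y ->
  dom A (vsub x y) /\ app A (vsub x y) = vsub (app A x) (app A y).
Proof.
  intros Dx Dy. destruct (lin_opp y Dy) as [D1 E1]. destruct Alin as [_ [Dadd _]].
  destruct (Dadd _ _ Dx D1) as [D2 E2]. unfold vsub. rewrite E2, E1. auto.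
Qed.
End Lin.

Lemma pow2_gt n : INR n < 2 ^ n.
Proof.
  induction n. simpl; lra. rewrite S_INR. simpl.
  assert (1 <= 2 ^ n) by (apply pow_R1_Rle; lra). lra.
Qed.

Lemma small_geom c eps : 0 <= c -> 0 < eps -> exists N, forall n, (n >= N)%nat -> c / 2 ^ n < eps.
Proof.
  intros Hc He. destruct (INR_unbounded (c / eps)) as [N HN]. exists N. intros n Hn.
  assert (INR N <= INR n) by (apply le_INR; lia).
  pose proof (pow2_gt n). assert (P : 0 < 2 ^ n) by (apply pow_lt; lra).
  apply Rmult_lt_reg_r with (2 ^ n); auto. unfold Rdiv. rewrite Rmult_assoc, Rinv_l by lra.
  assert (c / eps < 2 ^ n) by lra.
  apply Rmult_lt_compat_r with (r := eps) in H1; auto. unfold Rdiv in H1.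
  rewrite Rmult_assoc, Rinv_l in H1 by lra. lra.
Qed.

Section Baire.
Variable K : HilbertSpace.

Lemma complete_norm (u : nat -> K) :
  (forall eps, eps > 0 -> exists N, forall n m, (n >= N)%nat -> (m >= N)%nat -> norm (vsub (u n) (u m)) < eps) ->
  exists l, forall eps, eps > 0 -> exists N, forall n, (n >= N)%nat -> norm (vsub (u n) l) < eps.
Proof. intro C. exact (hs_complete K C). Qed.

Lemma baire (P : nat -> K -> Prop) : (forall g, exists n, P n g) ->
  exists n y0 r, r > 0 /\ forall y eps, norm (vsub y y0) < r -> eps > 0 ->
     exists g, P n g /\ norm (vsub y g) < eps.
Proof.
  intro Cov. apply NNPP; intro Hn.
  assert (Hstep : forall n y0 r, r > 0 -> exists y e, norm (vsub y y0) < r /\ e > 0 /\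
             forall g, P n g -> e <= norm (vsub y g)).
  { intros n y0 r Hr. apply NNPP; intro C. apply Hn. exists n, y0, r. split; auto.
    intros y e Hy He. apply NNPP; intro C2. apply C. exists y, e. repeat split; auto.
    intros g Pg. apply Rnot_lt_le. intro Lt. apply C2. exists g; auto. }
  assert (Hst2 : forall p : nat * (K * R), exists q : K * R,
     snd (snd p) > 0 -> snd q > 0 /\ norm (vsub (fst q) (fst (snd p))) + snd q <= snd (snd p)
       /\ snd q <= / 2 ^ (fst p) /\ forall g, P (fst p) g -> snd q < norm (vsub (fst q) g)).
  { intros [n [y0 r]]. simpl. destruct (Rlt_dec 0 r) as [Hr|Hr].
    - destruct (Hstep n y0 r Hr) as [y [e [Hy [He Hg]]]].
      assert (0 < / 2^n) by (apply Rinv_0_lt_compat, pow_lt; lra).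
      pose proof (Rmin_l (Rmin ((r - norm (vsub y y0))/2) (e/2)) (/ 2 ^ n)).
      pose proof (Rmin_r (Rmin ((r - norm (vsub y y0))/2) (e/2)) (/ 2 ^ n)).
      pose proof (Rmin_l ((r - norm (vsub y y0))/2) (e/2)).
      pose proof (Rmin_r ((r - norm (vsub y y0))/2) (e/2)).
      assert (0 < Rmin (Rmin ((r - norm (vsub y y0))/2) (e/2)) (/ 2 ^ n))
        by (apply Rmin_pos; [apply Rmin_pos|]; lra).
      set (r' := Rmin (Rmin ((r - norm (vsub y y0))/2) (e/2)) (/ 2 ^ n)) in *.
      exists (y, r'). intros _. simpl. clearbody r'.
      repeat split; try lra.
      intros g Pg. specialize (Hg g Pg). lra.
    - exists (y0, r). intro; lra. }
  set (f := fun p => proj1_sig (constructive_indefinite_description _ (Hst2 p))).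
  assert (Hf : forall p, snd (snd p) > 0 -> snd (f p) > 0 /\
        norm (vsub (fst (f p)) (fst (snd p))) + snd (f p) <= snd (snd p)
       /\ snd (f p) <= / 2 ^ (fst p) /\ forall g, P (fst p) g -> snd (f p) < norm (vsub (fst (f p)) g)).
  { intro p. exact (proj2_sig (constructive_indefinite_description _ (Hst2 p))). }
  set (sq := fun k => nat_rect (fun _ => (K * R)%type) (hs_zero, 1) (fun k q => f (k, q)) k).
  set (yk := fun k => fst (sq k)). set (rk := fun k => snd (sq k)).
  assert (sqS : forall k, sq (S k) = f (k, sq k)) by reflexivity.
  assert (pos : forall k, rk k > 0).
  { induction k. unfold rk; simpl; lra. unfold rk. rewrite sqS.
    exact (proj1 (Hf (k, sq k) IHk)). }
  assert (st : forall k, norm (vsub (yk (S k)) (yk k)) + rk (S k) <= rk k /\ rk (S k) <= / 2 ^ k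
        /\ forall g, P k g -> rk (S k) < norm (vsub (yk (S k)) g)).
  { intro k. unfold yk, rk. rewrite sqS. exact (proj2 (Hf (k, sq k) (pos k))). }
  assert (nest : forall m k, norm (vsub (yk (m + k)%nat) (yk k)) + rk (m + k)%nat <= rk k).
  { induction m; intro k.
    - simpl. rewrite vsub_diag, norm_zero. lra.
    - simpl. destruct (st (m + k)%nat) as [S1 _].
      pose proof (norm_vsub_tri _ (yk (S (m + k))) (yk (m + k)%nat) (yk k)).
      specialize (IHm k). lra. }
  destruct (complete_norm yk) as [y Hy].
  { intros eps He. destruct (small_geom 2 eps) as [N HN]; try lra.
    exists (S N). intros n m Hn1 Hm1.
    assert (B : forall j, (j >= S N)%nat -> norm (vsub (yk j) (yk (S N))) <= / 2 ^ N).
    { intros j Hj. replace j with ((j - S N) + S N)%nat by lia.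
      pose proof (nest (j - S N)%nat (S N)). pose proof (pos ((j - S N) + S N)%nat).
      destruct (st N) as [_ [S2 _]]. lra. }
    pose proof (norm_vsub_tri _ (yk n) (yk (S N)) (yk m)).
    rewrite (norm_vsub_sym _ (yk (S N)) (yk m)) in H.
    pose proof (B n Hn1). pose proof (B m Hm1). specialize (HN N (le_n N)).
    unfold Rdiv in HN. lra. }
  assert (lim : forall k, norm (vsub y (yk k)) <= rk k).
  { intro k. apply Rle_plus_epsilon. intros eps He.
    destruct (Hy eps He) as [N HN]. specialize (HN (N + k)%nat ltac:(lia)).
    pose proof (nest N k). pose proof (pos (N + k)%nat).
    pose proof (norm_vsub_tri _ y (yk (N + k)%nat) (yk k)).
    rewrite (norm_vsub_sym _ y (yk (N + k)%nat)) in H1. lra. }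
  destruct (Cov y) as [n Pn]. destruct (st n) as [_ [_ S3]]. specialize (S3 y Pn).
  specialize (lim (S n)). rewrite norm_vsub_sym in lim. lra.
Qed.
End Baire.

Lemma norm_le_sub (K : HilbertSpace) (a b : K) : norm a <= norm b + norm (vsub a b).
Proof.
  rewrite <- (vsub_add_back _ a b) at 1. rewrite hs_add_comm. apply norm_triangle.
Qed.

Section CGT.
Variable K : HilbertSpace.
Variable So : Op K K.
Hypothesis Slin : is_linear_op So.
Hypothesis Scl : closed_op So.
Hypothesis Sinj : forall x y, dom So x -> dom So y -> app So x = app So y -> x = y.
Hypothesis Ssurj : forall g, exists x, dom So x /\ app So x = g.

Lemma cgt_dense : exists M, M > 0 /\ forall h e, e > 0 -> exists x, dom So x /\
   norm x <= M * (norm h + e) /\ norm (vsub h (app So x)) < e.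
Proof.
  destruct (baire K (fun n g => exists x, dom So x /\ app So x = g /\ norm x <= INR n)) as
    [n [y0 [r [Hr Hd]]]].
  { intro g. destruct (Ssurj g) as [x [Dx Ex]]. destruct (INR_unbounded (norm x)) as [n Hn].
    exists n, x. repeat split; auto; lra. }
  assert (D : forall h e, norm h < r -> e > 0 -> exists x, dom So x /\ norm x <= 2 * INR n
            /\ norm (vsub h (app So x)) < e).
  { intros h e Hh He.
    destruct (Hd (hs_add y0 h) (e/2)) as [g1 [[x1 [D1 [E1 N1]]] G1]].
    { rewrite vsub_add_cancel_l; auto. } { lra. }
    destruct (Hd y0 (e/2)) as [g2 [[x2 [D2 [E2 N2]]] G2]].
    { rewrite vsub_diag, norm_zero; lra. } { lra. }
    destruct (lin_vsub _ _ So Slin x1 x2 D1 D2) as [D3 E3].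
    exists (vsub x1 x2). split; auto. split.
    - pose proof (norm_vsub_le _ x1 x2). lra.
    - rewrite E3, E1, E2, (vsub_three _ h g1 g2 y0).
      pose proof (norm_vsub_le _ (vsub (hs_add y0 h) g1) (vsub y0 g2)). lra. }
  assert (n0 : 0 <= INR n) by apply pos_INR.
  exists (4 * INR n / r + 1). split.
  { assert (0 <= 4 * INR n / r) by (unfold Rdiv; apply Rmult_le_pos; [lra | left; apply Rinv_0_lt_compat; lra]). lra. }
  intros h e He.
  pose proof (norm_nonneg _ h) as Nh.
  set (a := norm h + e). assert (Ha : 0 < a) by (unfold a; lra).
  set (t := r / (2 * a)). assert (Ht : 0 < t) by (unfold t, Rdiv; apply Rmult_lt_0_compat; [lra | apply Rinv_0_lt_compat; lra]).
  assert (ta : t * a = r / 2) by (unfold t; field; lra).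
  assert (ti : / t = 2 * a / r) by (unfold t; field; split; lra).
  destruct (D (hs_scal (mkC t 0) h) (t * e)) as [x' [Dx' [Nx' Rx']]].
  { rewrite norm_scal_real by lra. unfold a in ta. nra. }
  { nra. }
  destruct Slin as [_ [_ Dsc]].
  destruct (Dsc (mkC (/ t) 0) x' Dx') as [Dx Ex].
  exists (hs_scal (mkC (/ t) 0) x'). split; auto. split.
  - rewrite norm_scal_real by (left; apply Rinv_0_lt_compat; lra).
    rewrite ti. fold a.
    assert (2 * a / r * norm x' <= 2 * a / r * (2 * INR n)).
    { apply Rmult_le_compat_l; auto. unfold Rdiv. apply Rmult_le_pos; [lra | left; apply Rinv_0_lt_compat; lra]. }
    assert (2 * a / r * (2 * INR n) = 4 * INR n / r * a) by (field; lra).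
    nra.
  - rewrite Ex. rewrite <- (scal_inv_real _ t h) at 1 by lra.
    rewrite <- scal_vsub, norm_scal_real by (left; apply Rinv_0_lt_compat; lra).
    apply Rmult_lt_compat_l with (r := / t) in Rx'. 2:{ apply Rinv_0_lt_compat; lra. }
    replace (/ t * (t * e)) with e in Rx' by (field; lra). exact Rx'.
Qed.

Theorem cgt : exists c, forall x, dom So x -> norm x <= c * norm (app So x).
Proof.
  destruct cgt_dense as [M [HM Hd]].
  exists M. intros x0 Dx0. set (y := app So x0).
  apply Rle_plus_epsilon. intros eps Heps.
  set (dl := eps / (4 * M)). assert (Hdl : 0 < dl) by (unfold dl; apply Rdiv_lt_0_compat; lra).
  replace eps with (4 * M * dl) by (unfold dl; field; lra).
  assert (Hx : forall p : nat * K, exists x, dom So x /\ norm x <= M * (norm (snd p) + dl / 2 ^ (fst p))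
      /\ norm (vsub (snd p) (app So x)) < dl / 2 ^ (fst p)).
  { intros [k h]. simpl. apply Hd. apply Rdiv_lt_0_compat; auto. apply pow_lt; lra. }
  set (X := fun k h => proj1_sig (constructive_indefinite_description _ (Hx (k, h)))).
  assert (HX : forall k h, dom So (X k h) /\ norm (X k h) <= M * (norm h + dl / 2 ^ k)
      /\ norm (vsub h (app So (X k h))) < dl / 2 ^ k).
  { intros k h. exact (proj2_sig (constructive_indefinite_description _ (Hx (k, h)))). }
  clearbody X.
  set (hs := fun k => nat_rect (fun _ => K) y (fun k h => vsub h (app So (X k h))) k).
  assert (hsS : forall k, hs (S k) = vsub (hs k) (app So (X k (hs k)))) by reflexivity.
  set (ss := fun k => nat_rect (fun _ => K) hs_zero (fun k s => hs_add s (X k (hs k))) k).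
  assert (ssS : forall k, ss (S k) = hs_add (ss k) (X k (hs k))) by reflexivity.
  assert (hs0 : hs 0%nat = y) by reflexivity.
  assert (ss0 : ss 0%nat = hs_zero) by reflexivity.
  clearbody hs ss.
  assert (p2 : forall k, 0 < 2 ^ k) by (intro; apply pow_lt; lra).
  assert (F1 : forall k, norm (hs (S k)) < dl / 2 ^ k).
  { intro k. rewrite hsS. apply HX. }
  assert (F2 : forall k, dom So (ss k) /\ app So (ss k) = vsub y (hs k)).
  { induction k.
    - rewrite ss0, hs0, vsub_diag. split. apply Slin. apply (lin_zero _ _ So Slin).
    - destruct IHk as [D1 E1]. rewrite ssS. destruct Slin as [_ [Dadd _]].
      destruct (HX k (hs k)) as [D2 _].
      destruct (Dadd _ _ D1 D2) as [D3 E3]. split; auto.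
      rewrite E3, E1, hsS, vsub_vsub_r. reflexivity. }
  assert (F3 : forall k, norm (X (S k) (hs (S k))) <= 3 * M * dl / 2 ^ (S k)).
  { intro k. destruct (HX (S k) (hs (S k))) as [_ [N1 _]]. specialize (F1 k).
    simpl pow in *. specialize (p2 k).
    set (q := 2 ^ k) in *.
    assert (dl / q = 2 * (dl / (2 * q))) by (field; lra).
    assert (3 * M * dl / (2 * q) = M * (3 * (dl / (2 * q)))) by (field; lra).
    rewrite H0. rewrite H in F1. nra. }
  assert (F4 : forall d m, norm (vsub (ss (d + S m)%nat) (ss (S m))) <=
                6 * M * dl * (/ 2 ^ (S m) - / 2 ^ (d + S m))).
  { induction d; intro m.
    - simpl plus. rewrite vsub_diag, norm_zero. lra.
    - replace (S d + S m)%nat with (S (d + S m)) by lia. rewrite ssS, vsub_add_comm.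
      pose proof (norm_triangle _ (vsub (ss (d + S m)%nat) (ss (S m))) (X (d + S m)%nat (hs (d + S m)%nat))).
      specialize (IHd m).
      replace (d + S m)%nat with (S (d + m)) in * by lia.
      specialize (F3 (d + m)%nat).
      assert (E : / 2 ^ S (S (d + m)) = / 2 ^ S (d + m) / 2) by (pose proof (p2 (d+m)%nat); simpl pow; field; repeat split; lra).
      rewrite E.
      assert (E2 : 3 * M * dl / 2 ^ S (d + m) = 3 * (M * dl) * / 2 ^ S (d + m)) by (unfold Rdiv; ring).
      rewrite E2 in F3.
      set (u := / 2 ^ S (d + m)) in *. set (c := M * dl) in *.
      assert (6 * M * dl * (/ 2 ^ S m - u) = 6 * c * / 2 ^ S m - 6 * c * u) by (unfold c; ring).
      assert (6 * M * dl * (/ 2 ^ S m - u / 2) = 6 * c * / 2 ^ S m - 3 * c * u). { unfold c. field. apply pow_nonzero; lra. }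
      lra. }
  assert (F5 : forall d m, norm (vsub (ss (d + S m)%nat) (ss (S m))) <= 3 * M * dl / 2 ^ m).
  { intros d m. specialize (F4 d m). pose proof (p2 (d + S m)%nat) as P1. pose proof (p2 m) as P2.
    assert (0 < / 2 ^ (d + S m)) by (apply Rinv_0_lt_compat; exact P1).
    assert (6 * M * dl * / 2 ^ S m = 3 * M * dl / 2 ^ m) by (simpl pow; field; lra).
    assert (0 < M * dl) by (apply Rmult_lt_0_compat; lra). nra. }
  destruct (complete_norm K ss) as [xl Hxl].
  { intros e He. destruct (small_geom (6 * M * dl) e) as [N HN].
    { assert (0 < M * dl) by (apply Rmult_lt_0_compat; lra). lra. } { lra. }
    exists (S N). intros n m Hn1 Hm1.
    pose proof (F5 (n - S N)%nat N) as A1. pose proof (F5 (m - S N)%nat N) as A2.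
    replace (n - S N + S N)%nat with n in A1 by lia.
    replace (m - S N + S N)%nat with m in A2 by lia.
    pose proof (norm_vsub_tri _ (ss n) (ss (S N)) (ss m)).
    rewrite (norm_vsub_sym _ (ss (S N)) (ss m)) in H.
    specialize (HN N (le_n N)).
    assert (6 * M * dl / 2 ^ N = 3 * M * dl / 2 ^ N + 3 * M * dl / 2 ^ N) by (field; apply pow_nonzero; lra).
    lra. }
  assert (Cl : dom So xl /\ app So xl = y).
  { apply (Scl ss xl y).
    - intro n. apply F2.
    - exact Hxl.
    - intros e He. destruct (small_geom dl e) as [N HN]; try lra.
      exists (S N). intros n Hn. destruct (F2 n) as [_ E]. rewrite E.
      change (norm (vsub (vsub y (hs n)) y) < e). rewrite vsub_self_l, norm_opp.
      replace n with (S (n - 1)) by lia. specialize (F1 (n - 1)%nat).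
      specialize (HN (n - 1)%nat ltac:(lia)). lra. }
  destruct Cl as [Dxl Exl].
  assert (Eq : x0 = xl) by (apply Sinj; auto; rewrite Exl; reflexivity).
  subst x0.
  apply Rle_plus_epsilon. intros e He. destruct (Hxl e He) as [N HN].
  specialize (HN (S N)) . specialize (HN ltac:(lia)).
  pose proof (norm_le_sub _ xl (ss (S N))). rewrite norm_vsub_sym in HN.
  pose proof (norm_le_sub _ (ss (S N)) (ss 1%nat)).
  pose proof (F5 N 0%nat). replace (N + 1)%nat with (S N) in H1 by lia.
  rewrite (ssS 0%nat), ss0, hs_add_0_l, hs0 in H0, H1.
  destruct (HX 0%nat y) as [_ [N0 _]]. simpl pow in *.
  fold y. replace (dl / 1) with dl in N0 by field.
  assert (3 * M * dl / 1 = 3 * M * dl) by field.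
  rewrite H2 in H1. lra.
Qed.
End CGT.

Theorem corollary2p10 (H K : HilbertSpace) (A : Op H H) (B : Op K K) (T : Op H K) :
  closed_dd_op A -> closed_dd_op B ->
  dashv_via T A B ->
  inverse_bounded_everywhere T ->
  forall lam : Cpx, in_resolvent A lam -> ~ in_point_spectrum B lam -> in_resolvent B lam.
Proof.
  intros [Alin _] [Blin [Bcl _]] [[[Tlin _] [io0a [io0b [io1 io2]]]] _] [Tev _] lam
         [_ [Asurj _]] Hnp.
  set (So := {| dom := dom B ; app := shift_app B lam |} : Op K K).
  assert (Slin : is_linear_op So).
  { destruct Blin as [B0 [Badd Bsc]]. split; [exact B0|split].
    - intros x y Dx Dy. destruct (Badd x y Dx Dy) as [D E]. split; auto.
      simpl. unfold shift_app. rewrite E, hs_scal_add_r. apply vsub_add_l.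
    - intros a x Dx. destruct (Bsc a x Dx) as [D E]. split; auto.
      simpl. unfold shift_app. rewrite E, (scal_comm _ lam a x), scal_vsub. reflexivity. }
  set (L := sqrt (Re lam * Re lam + Im lam * Im lam)).
  assert (L0 : 0 <= L) by apply sqrt_pos.
  assert (Scl : closed_op So).
  { intros u x g Hu Hcx Hcg. simpl in Hu.
    assert (CB : converges (fun n => app B (u n)) (hs_add g (hs_scal lam x))).
    { intros eps He.
      destruct (Hcg (eps/2) ltac:(lra)) as [N1 HN1].
      destruct (Hcx (eps / (2 * (L + 1)))) as [N2 HN2].
      { apply Rdiv_lt_0_compat; lra. }
      exists (N1 + N2)%nat. intros n Hn.
      specialize (HN1 n ltac:(lia)). specialize (HN2 n ltac:(lia)).
      simpl in HN1. unfold shift_app in HN1.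
      rewrite <- (vsub_add_back _ (app B (u n)) (hs_scal lam (u n))), vsub_add_l, <- scal_vsub.
      pose proof (norm_triangle _ (vsub (vsub (app B (u n)) (hs_scal lam (u n))) g)
                    (hs_scal lam (vsub (u n) x))).
      rewrite norm_scal in H0. fold L in H0.
      assert (L * norm (vsub (u n) x) <= L * (eps / (2 * (L + 1)))) by
        (apply Rmult_le_compat_l; lra).
      assert (L * (eps / (2 * (L + 1))) <= eps / 2).
      { unfold Rdiv. rewrite Rinv_mult.
        assert (L * / (L + 1) <= 1).
        { apply Rmult_le_reg_r with (L + 1); [lra|]. rewrite Rmult_assoc, Rinv_l by lra. lra. }
        assert (0 < / (L + 1)) by (apply Rinv_0_lt_compat; lra).
        nra. }
      lra. }
    destruct (Bcl u x _ Hu Hcx CB) as [Dx Ex]. split; auto.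
    simpl. unfold shift_app. rewrite Ex. apply vsub_add_cancel. }
  assert (Sinj : forall x y, dom So x -> dom So y -> app So x = app So y -> x = y).
  { intros x y Dx Dy Exy. destruct (lin_vsub _ _ So Slin x y Dx Dy) as [Dz Ez].
    rewrite Exy, vsub_diag in Ez.
    destruct (classic (vsub x y = hs_zero)) as [Z|Z]. apply vsub_eq0; auto.
    exfalso. apply Hnp. exists (vsub x y). split; [exact Dz|split; auto].
    apply vsub_eq0. exact Ez. }
  assert (Ssurj : forall g, exists x, dom So x /\ app So x = g).
  { intro g. destruct (Tev g) as [h0 [Dh0 Eh0]]. destruct (Asurj h0) as [x [Dx Ex]].
    exists (app T x). simpl. split; [apply io1; auto|].
    unfold shift_app. rewrite io2 by auto.
    pose proof Tlin as [_ [_ Tsc]]. destruct (Tsc lam x (io0a x Dx)) as [D1 E1].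
    rewrite <- E1. destruct (lin_vsub _ _ T Tlin _ _ (io0b x Dx) D1) as [_ E2].
    rewrite <- E2. fold (shift_app A lam x). rewrite Ex. exact Eh0. }
  destruct (cgt K So Slin Scl Sinj Ssurj) as [c Hc].
  split; [exact Sinj|split; [exact Ssurj|]].
  exists c. exact Hc.
Qed.
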